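(* Under the setting and hypotheses (i),(ii) below, there exists a constant $C=C(W,F,R,l)>0$ such that for all integers $N>1$, all $\lambda>0$, all real $E\neq 0$, all $x\in\mathbb{T}$ and all $1\le\alpha,\alpha'\le Nl$, $$\frac{1}{Nl}\log\big|\tilde\mu_N(x,E)_{(\alpha,\alpha')}\big|\le -\frac{|p(\alpha)-p(\alpha')|}{Nl}\log(\lambda+|E|)+\log\Big(1+\frac{\lambda}{|E|}\Big)+C .$$
   Context: Let $l\ge1$ and let $W,R,F$ be $l\times l$ real symmetric matrix functions on $\mathbb{T}=\mathbb{R}/2\pi\mathbb{Z}$ such that (i) all entries of $W$ and all off-diagonal entries of $R,F$ are real analytic; (ii) the diagonal entries are $F_{ii}=\tilde\phi^F_{ii}/\phi^F_{ii}$, $R_{ii}=\tilde\phi^R_{ii}/\phi^R_{ii}$ with $\tilde\phi^F_{ii},\phi^F_{ii},\tilde\phi^R_{ii},\phi^R_{ii}$ real analytic, $\phi^F_{ii},\phi^R_{ii}$ having finitely many zeros. Let $M(x)=\mathrm{diag}\{\phi^F_{ii}(x)\}_{i}\,\mathrm{diag}\{\phi^R_{ii}(x)\}_{i}$ and, for fixed $\omega\in\mathbb{T}$, $M_j(x)=M(x+j\omega)$, $W_n(x)=W(x+n\omega)$, $R_n(x)=R(x+n\omega)$, $F_n(x)=F(x+n\omega)$. $H_\lambda(x)$ is the operator $[H_\lambda(x)\vec\varphi]_n=-(W_{n+1}(x)\vec\varphi_{n+1}+W_n^T(x)\vec\varphi_{n-1}+R_n(x)\vec\varphi_n)+\lambda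 F_n(x)\vec\varphi_n$ on $\ell^2(\mathbb{Z},\mathbb{R}^l)$, and $H_N(x)$ is its restriction to the sites $[1,N]$, an $Nl\times Nl$ matrix ($N\times N$ blocks of size $l\times l$). Define $\tilde H_N(x,E)=(H_N(x)-E)\,\mathrm{diag}\{\tfrac{1}{\sqrt{1+E^2}}M_j(x),\ 1\le j\le N\}$ (block-diagonal); its entries are real analytic in $x$. $\tilde\mu_N(x,E)_{(\alpha,\alpha')}$ denotes the $(\alpha',\alpha)$-minor of $\tilde H_N(x,E)$ (determinant after deleting row $\alpha'$ and column $\alpha$). Every $1\le\alpha\le Nl$ is written uniquely as $\alpha=p(\alpha)l+q(\alpha)$ with $p(\alpha)\in\{0,\dots,N-1\}$, $q(\alpha)\in\{1,\dots,l\}$. *)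

(* Defs.v *)
From HB Require Import structures.
From mathcomp Require Import all_boot all_order all_algebra.
From mathcomp Require Import all_classical all_reals all_analysis.
Set Implicit Arguments. Unset Strict Implicit. Unset Printing Implicit Defensive.
Import Order.TTheory GRing.Theory Num.Theory.
Import numFieldNormedType.Exports.
Local Open Scope classical_set_scope.
Local Open Scope ring_scope.

Section Defs.
Variable R : realType.

Definition real_analytic (f : R -> R) : Prop :=
  forall x0 : R, exists (a : nat -> R) (r : R), 0 < r /\
    forall x : R, `|x - x0| < r ->
      (fun n : nat => \sum_(k < n) a k * (x - x0) ^+ k) @ \oo --> f x.

(* functions on the torus T = R / 2 pi Z are 2pi-periodic functions on R *)
Definition periodic2pi (T : Type) (f : R -> T) : Prop :=
  forall x : R, f (x + 2 * pi) = f x.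

Definition finitely_many_zeros (f : R -> R) : Prop :=
  finite_set [set x : R | 0 <= x < 2 * pi /\ f x = 0].

(* entry of an l x l matrix at natural indices (0 outside range) *)
Definition ent (l : nat) (A : 'M[R]_l) (i k : nat) : R :=
  match insub i, insub k with
  | Some i', Some k' => A i' k'
  | _, _ => 0
  end.

Definition fent (l : nat) (f : 'I_l -> R) (i : nat) : R :=
  if insub i is Some i' then f i' else 0.

(* p(alpha) for the 0-based index a = alpha - 1 : alpha = p l + q, 1<=q<=l *)
Definition pidx (l n : nat) (a : 'I_n) : nat := (val a %/ l)%N.

(* The matrix tilde H_N(x,E) = (H_N(x) - E) diag{ M_j(x)/sqrt(1+E^2) },
   row index r = a*l + i (block a = site a+1, component i), 0-based;
   column index c = b*l + k.  Column c is scaled by M_{b+1}(x)_{kk}/sqrt(1+E^2)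
   where M(y)_{kk} = phiF_k(y) phiR_k(y).  The diagonal entries are written in
   their real-analytic form
     (-phitR_i phiF_i + lam phitF_i phiR_i - E phiF_i phiR_i)(x+(a+1)w)/sqrt(1+E^2),
   which equals (-R_ii + lam F_ii - E) M_ii / sqrt(1+E^2) wherever
   phiF_i, phiR_i do not vanish (and is its analytic extension elsewhere). *)
Definition tildeH (l N : nat) (W Rm Fm : R -> 'M[R]_l)
  (phiF phitF phiR phitR : 'I_l -> R -> R) (w lam E x : R) : 'M[R]_(N * l) :=
  \matrix_(r < N * l, c < N * l)
    let a := (val r %/ l)%N in let i := (val r %% l)%N in
    let b := (val c %/ l)%N in let k := (val c %% l)%N in
    let xr := x + (a.+1)%:R * w in
    let xc := x + (b.+1)%:R * w in
    let s := Num.sqrt (1 + E ^+ 2) in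
    let m := fent (fun j => phiF j xc * phiR j xc) k in
    if a == b then
      if i == k then
        (- fent (fun j => phitR j xr * phiF j xr) i
         + lam * fent (fun j => phitF j xr * phiR j xr) i
         - E * fent (fun j => phiF j xr * phiR j xr) i) / s
      else (- ent (Rm xr) i k + lam * ent (Fm xr) i k) * m / s
    else if b == a.+1 then
      (* block (n, n+1) = - W_{n+1}, n = a+1 *)
      - ent (W (x + (a.+2)%:R * w)) i k * m / s
    else if a == b.+1 then
      (* block (n, n-1) = - W_n^T, n = a+1 *)
      - ent (W xr) k i * m / s
    else 0.

(* tilde mu_N(x,E)_(alpha,alpha') : the (alpha',alpha)-minor, i.e. the
   determinant after deleting row alpha' and column alpha. *)
Definition tmu (l N : nat) (W Rm Fm : R -> 'M[R]_l)
  (phiF phitF phiR phitR : 'I_l -> R -> R) (w lam E x : R)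
  (al al' : 'I_(N * l)) : R :=
  \det (row' al' (col' al (tildeH N W Rm Fm phiF phitF phiR phitR w lam E x))).

End Defs.
Arguments tildeH {R l} N.
Arguments tmu {R l} N.

(* Main.v *)
Require Import Defs.
From HB Require Import structures.
From mathcomp Require Import all_boot all_order all_algebra.
From mathcomp Require Import all_classical all_reals all_analysis.
Import Order.TTheory GRing.Theory Num.Theory.
Import numFieldNormedType.Exports.
From mathcomp Require Import ring lra zify.
Local Open Scope ring_scope.

Section Ana.
Variable R : realType.

Lemma geo_half (n : nat) : \sum_(k < n) (2^-1 : R) ^+ k + 2 * (2^-1) ^+ n = 2.
Proof.
elim: n => [|n IH]; first by rewrite big_ord0 add0r expr0 mulr1.
rewrite big_ord_recr /= -addrA; apply: (etrans _ IH); congr (_ + _).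
rewrite exprS mulrA divff ?mul1r //.
by rewrite mulr_natl mulr2n.
Qed.

Lemma ra_locbound (f : R -> R) x0 : real_analytic f ->
  exists r c : R, 0 < r /\ forall y, `|y - x0| < r -> `|f y| <= c.
Proof.
move=> /(_ x0) [a [r [r0 Hc]]].
have h1 := Hc (x0 + r/2).
have r2 : 0 < r / 2 by rewrite divr_gt0.
have rr : r / 2 < r by rewrite ltr_pdivrMr // ltr_pMr // ltr1n.
have e1 : x0 + r / 2 - x0 = r / 2 by rewrite addrAC subrr add0r.
rewrite e1 gtr0_norm // in h1; have {}h1 := h1 rr.
pose u := fun k => a k * (r/2) ^+ k.
have hs : cvgn (series u).
  apply/cvg_ex; exists (f (x0 + r/2)).
  have -> : series u = (fun n => \sum_(k < n) a k * (r / 2) ^+ k).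
    by apply/funext => n; rewrite /series /= big_mkord.
  by [].
have := cvg_series_bounded hs => -[M [_ HM]].
have {}HM : forall k, `|u k| <= M + 1.
  by move=> k; apply: (HM (M + 1)) => //; rewrite ltrDl.
exists (r / 4), (2 * (M + 1)); split; first by rewrite divr_gt0.
move=> y hy.
have r4 : r / 4 < r by rewrite ltr_pdivrMr // ltr_pMr // ltr1n.
have hcy := Hc y (lt_trans hy r4).
apply: (ler_cvg_to (cvg_norm hcy) (cvg_cst _)).
apply: nearW => n.
apply: le_trans (ler_norm_sum _ _ _) _.
apply: (@le_trans _ _ (\sum_(k < n) (M + 1) * (2^-1) ^+ k)).
  apply: ler_sum => k _.
  rewrite normrM normrX.
  have -> : (2^-1 : R) = (r / 4) / (r / 2) by field; rewrite gt_eqF.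
  have hu := HM k; rewrite /u normrM normrX (gtr0_norm r2) in hu.
  apply: (@le_trans _ _ (`|a k| * (r / 4) ^+ k)).
    apply: ler_wpM2l => //; apply: lerXn2r => //; rewrite ?ltW //.
    by rewrite nnegrE divr_ge0 ?ltW.
  have -> : (r / 4) ^+ k = (r / 2) ^+ k * ((r / 4) / (r / 2)) ^+ k.
    by rewrite -exprMn; congr (_ ^+ _); field; rewrite gt_eqF.
  rewrite mulrA; apply: ler_wpM2r => //.
  by rewrite exprn_ge0 // divr_ge0 // divr_ge0 // ltW.
rewrite -mulr_sumr mulrC ler_wpM2r //; first by rewrite (le_trans _ (HM 0%N)).
rewrite -[X in _ <= X](geo_half n) lerDl mulr_ge0 // exprn_ge0 //.
Qed.

Lemma ra_segbound (f : R -> R) (a b : R) : real_analytic f ->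
  exists c : R, forall y, a <= y <= b -> `|f y| <= c.
Proof.
move=> Hf.
have := (compact_near_coveringP `[a, b]%classic).1 (@segment_compact R a b) R (pinfty_nbhs R)
  (fun M y => `|f y| <= M) _.
move=> /(_ proper_pinfty_nbhs) H.
have Hloc : forall x : R, `[a, b]%classic x ->
    \forall x' \near x & i \near +oo, `|f x'| <= i.
  move=> x _; have [r [c [r0 Hc]]] := ra_locbound f x Hf.
  near=> y M.
  apply: (le_trans (Hc y _)).
    by near: y; apply: (@cvgr_distC_lt _ _ _ (nbhs x) _ id x _ r) => //; exact: cvg_id.
  rewrite /=; near: M; apply: nbhs_pinfty_ge; by rewrite num_real.
Unshelve. all: end_near.
have [M [_ HM]] := H Hloc.
exists (M + 1) => y hy; apply: (HM (M + 1)); first by rewrite ltrDl.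
by rewrite /= in_itv /=.
Qed.

Lemma per_nat (T : Type) (f : R -> T) : periodic2pi f ->
  forall x (n : nat), f (x + n%:R * (2 * pi)) = f x.
Proof.
move=> Hp x; elim=> [|n IH]; first by rewrite mul0r addr0.
by rewrite -natr1 mulrDl mul1r addrA Hp.
Qed.

Lemma per_int (T : Type) (f : R -> T) : periodic2pi f ->
  forall x (z : int), f (x + z%:~R * (2 * pi)) = f x.
Proof.
move=> Hp x [n|n].
  by change ((Posz n)%:~R : R) with (n%:R : R); rewrite per_nat.
change ((Negz n)%:~R : R) with (- (n.+1)%:R : R).
by rewrite -(@per_nat _ _ Hp (x + _) n.+1) mulNr subrK.
Qed.

Lemma ra_bound (f : R -> R) : real_analytic f -> periodic2pi f ->
  exists c : R, forall y, `|f y| <= c.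
Proof.
move=> Hf Hp; have [c Hc] := ra_segbound f 0 (2 * pi) Hf.
exists c => y.
have p0 : 0 < 2 * pi :> R by rewrite mulr_gt0 // pi_gt0.
set z := Num.floor (y / (2 * pi)).
rewrite -{1}(subrK (z%:~R * (2 * pi)) y) (@per_int _ _ Hp).
have /andP[h1 h2] := floor_itv (y / (2 * pi)).
apply: Hc; apply/andP; split.
  by rewrite subr_ge0 -ler_pdivlMr.
rewrite lerBlDr; move: h2; rewrite -/z intrD ltr_pdivrMr // mulrDl mul1r.
by rewrite addrC => /ltW.
Qed.
End Ana.

Section Alg.
Variable R : realType.

Lemma sum_lift_le n (F : 'I_n.+1 -> R) (j : 'I_n.+1) :
  (forall k, 0 <= F k) -> \sum_(k < n) F (lift j k) <= \sum_k F k.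
Proof.
move=> F0; rewrite [X in _ <= X](bigD1_ord j) //=.
by apply: ler_wpDl.
Qed.

Lemma det_rowsum_le n (A : 'M[R]_n) (S : R) : 0 <= S ->
  (forall i, \sum_j `|A i j| <= S) -> `|\det A| <= S ^+ n.
Proof.
elim: n A => [|n IH] A S0 HA; first by rewrite det_mx00 normr1 expr0.
rewrite (expand_det_row A ord0).
apply: le_trans (ler_norm_sum _ _ _) _.
apply: (@le_trans _ _ (\sum_j `|A ord0 j| * S ^+ n)).
  apply: ler_sum => j _; rewrite normrM; apply: ler_wpM2l => //.
  rewrite /cofactor normrM normrX normrN1 expr1n mul1r.
  apply: IH => // i; apply: le_trans (HA (lift ord0 i)).
  under eq_bigr do rewrite !mxE.
  exact: (@sum_lift_le n (fun k => `|A (lift ord0 i) k|) j (fun k => normr_ge0 _)).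
by rewrite -big_distrl /= exprS ler_wpM2r // exprn_ge0.
Qed.

Lemma minor_bound m (H : 'M[R]_m) (bl : 'I_m -> nat) (g S : R) (al al' : 'I_m) :
  1 <= g -> 0 <= S ->
  (forall t : R, 0 < t -> t <= g -> t^-1 <= g ->
     forall i, \sum_j `|t ^+ bl i * t ^- bl j * H i j| <= S) ->
  `|\det (row' al' (col' al H))|
     <= g ^- ((bl al - bl al') + (bl al' - bl al))%N * S ^+ m.-1.
Proof.
case: m H bl al al' => [|m] H bl al al'; first by case: al.
move=> g1 S0 HS; rewrite /=.
have g0 : 0 < g := lt_le_trans ltr01 g1.
set p := bl al; set p' := bl al'.
pose t := if (p <= p')%N then g^-1 else g.
have t0 : 0 < t by rewrite /t; case: ifP; rewrite ?invr_gt0.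
have tg : t <= g.
  by rewrite /t; case: ifP => // _; apply: (le_trans _ g1); rewrite invf_le1.
have tig : t^-1 <= g.
  rewrite /t; case: ifP => _; first by rewrite invrK.
  by apply: (le_trans _ g1); rewrite invf_le1.
pose Ht := \matrix_(i, j) (t ^+ bl i * t ^- bl j * H i j).
pose u := \row_(i < m) t ^+ bl (lift al' i).
pose v := \row_(j < m) t ^- bl (lift al j).
have eqB : row' al' (col' al Ht) = diag_mx u *m row' al' (col' al H) *m diag_mx v.
  by apply/matrixP => i j; rewrite mul_mx_diag mxE mul_diag_mx !mxE mulrAC.
have detB := congr1 determinant eqB.
rewrite !det_mulmx !det_diag in detB.
set T := \prod_(i < m.+1) t ^+ bl i.
have T0 : T != 0 by apply/prodf_neq0 => i _; rewrite expf_neq0 // gt_eqF.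
have eU : \prod_i u 0 i = T / t ^+ p'.
  rewrite /T (bigD1_ord al') //= mulrC mulKf ?expf_neq0 ?gt_eqF //.
  by apply: eq_bigr => i _; rewrite mxE.
have eV : \prod_i v 0 i = (T / t ^+ p)^-1.
  rewrite /T (bigD1_ord al) //= mulrC mulKf ?expf_neq0 ?gt_eqF //.
  by rewrite -prodfV; apply: eq_bigr => i _; rewrite mxE.
rewrite eU eV in detB.
have eA : \det (row' al' (col' al H)) = \det (row' al' (col' al Ht)) * t ^+ p' / t ^+ p.
  rewrite detB; field.
  by rewrite T0 !expf_neq0 ?gt_eqF.
rewrite eA -mulrA normrM mulrC; apply: ler_pM.
- by rewrite normr_ge0.
- by rewrite normr_ge0.
- rewrite /t; case: leqP => h.
    have -> : (p - p')%N = 0%N by apply/eqP; rewrite subn_eq0.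
    rewrite add0n -{1}(subnKC h) exprD mulrAC divff ?expf_neq0 ?invr_neq0 ?gt_eqF //.
    by rewrite mul1r exprVn ger0_norm // invr_ge0 exprn_ge0 // ltW.
  have -> : (p' - p)%N = 0%N by apply/eqP; rewrite subn_eq0 ltnW.
  rewrite addn0 -{1}(subnKC (ltnW h)) exprD invfM mulrA divff ?expf_neq0 ?gt_eqF //.
  by rewrite mul1r ger0_norm // invr_ge0 exprn_ge0 // ltW.
apply: det_rowsum_le => // i.
apply: le_trans (HS t t0 tg tig (lift al' i)).
under eq_bigr do rewrite !mxE.
exact: (@sum_lift_le m (fun k => `|t ^+ bl (lift al' i) / t ^+ bl k * H (lift al' i) k|) al (fun k => normr_ge0 _)).
Qed.
End Alg.

Section TH.
Variable R : realType.

Lemma fent_le l (f : 'I_l -> R) K k : 0 <= K -> (forall j, `|f j| <= K) -> `|fent f k| <= K.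
Proof. by move=> K0 Hf; rewrite /fent; case: insub => [j|] //; rewrite normr0. Qed.

Lemma L_diag (x y z lam E K s : R) : `|x| <= K -> `|y| <= K -> `|z| <= K -> 0 < lam -> 1 <= K -> 0 < s ->
  `|(- x + lam * y - E * z) / s| <= (1 + lam + `|E|) * K * K / s.
Proof.
move=> hx hy hz l0 K1 s0.
rewrite normrM normfV (gtr0_norm s0) ler_pM2r ?invr_gt0 //.
apply: (le_trans (ler_normB _ _)); rewrite normrM.
apply: (@le_trans _ _ ((1 + lam + `|E|) * K)); last first.
  have K0 : 0 <= K by rewrite (le_trans _ K1).
  by rewrite ler_peMr //; apply: mulr_ge0 => //; rewrite !addr_ge0 // ltW.
rewrite !mulrDl mul1r; apply: lerD; last by rewrite ler_wpM2l.
apply: (le_trans (ler_normD _ _)); rewrite normrN normrM (gtr0_norm l0).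
by rewrite lerD // ler_wpM2l // ltW.
Qed.

Lemma L_off (x y mm lam E K s : R) : `|x| <= K -> `|y| <= K -> `|mm| <= K -> 0 < lam -> 1 <= K -> 0 < s ->
  `|(- x + lam * y) * mm / s| <= (1 + lam + `|E|) * K * K / s.
Proof.
move=> hx hy hm l0 K1 s0.
rewrite normrM normfV (gtr0_norm s0) ler_pM2r ?invr_gt0 // normrM.
have K0 : 0 <= K by rewrite (le_trans _ K1).
apply: ler_pM => //.
apply: (le_trans (ler_normD _ _)); rewrite normrN normrM (gtr0_norm l0).
rewrite !mulrDl mul1r; apply: ler_wpDr; first by rewrite mulr_ge0.
by rewrite lerD // ler_wpM2l // ltW.
Qed.

Lemma L_W (x mm K s : R) : `|x| <= K -> `|mm| <= K -> 0 < s ->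
  `|- x * mm / s| <= K * K / s.
Proof.
move=> hx hm s0.
have K0 : 0 <= K by rewrite (le_trans _ hx).
by rewrite normrM normfV (gtr0_norm s0) ler_pM2r ?invr_gt0 // normrM normrN ler_pM.
Qed.

Lemma cond_help l j a : (0 < l)%N -> (a - 1 <= j %/ l)%N -> (j %/ l <= a.+1)%N ->
  ((a - 1) * l <= j < a.+2 * l)%N.
Proof.
move=> l0 h1 h2; apply/andP; split.
  by apply: leq_trans (leq_trunc_div j l); rewrite leq_mul2r h1 orbT.
by apply: leq_trans (ltn_ceil j l0) _; rewrite leq_mul2r ltnS h2 orbT.
Qed.

Lemma tildeH_entry (l N : nat) (W Rm Fm : R -> 'M[R]_l)
  (phiF phitF phiR phitR : 'I_l -> R -> R) (w lam E x K t : R) :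
  (0 < l)%N -> 0 < lam -> 1 <= K ->
  (forall j y, `|phitR j y * phiF j y| <= K) ->
  (forall j y, `|phitF j y * phiR j y| <= K) ->
  (forall j y, `|phiF j y * phiR j y| <= K) ->
  (forall i k y, `|ent (W y) i k| <= K) ->
  (forall i k y, i != k -> `|ent (Rm y) i k| <= K) ->
  (forall i k y, i != k -> `|ent (Fm y) i k| <= K) ->
  0 < t -> t <= 1 + lam + `|E| -> t^-1 <= 1 + lam + `|E| ->
  forall i j : 'I_(N * l),
  `|t ^+ (val i %/ l) * t ^- (val j %/ l) *
     tildeH N W Rm Fm phiF phitF phiR phitR w lam E x i j|
  <= if (((val i %/ l) - 1) * l <= val j < (val i %/ l).+2 * l)%N
     then (1 + lam + `|E|) * K * K / Num.sqrt (1 + E ^+ 2) else 0.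
Proof.
move=> l0 lam0 K1 h1 h2 h3 hW hR hF t0 tg tig i j.
rewrite /tildeH mxE /=.
set a := (i %/ l)%N; set b := (j %/ l)%N.
set s := Num.sqrt (1 + E ^+ 2).
have s0 : 0 < s by rewrite sqrtr_gt0 ltr_pwDl // sqr_ge0.
set g := 1 + lam + `|E|.
have g0 : 0 <= g by rewrite /g !addr_ge0 // ltW.
have K0 : 0 <= K by rewrite (le_trans _ K1).
have Bd0 : 0 <= g * K * K / s by rewrite !mulr_ge0 // invr_ge0 ltW.
have tn : forall n, t ^+ n != 0 by move=> n; rewrite expf_neq0 // gt_eqF.
have fb : forall y k, `|fent (fun j0 => phiF j0 y * phiR j0 y) k| <= K.
  by move=> y k; apply: fent_le.
rewrite normrM.
have [ab|nab] := eqVneq a b.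
  have -> : ((a - 1) * l <= j < a.+2 * l)%N.
    by apply: cond_help => //; rewrite -/b -ab ?leq_subr // leqW.
  rewrite -ab ?eqxx divff // normr1 mul1r.
  case: ifP => [_|/negbT nik].
    by apply: L_diag => //; apply: fent_le.
  by apply: L_off => //; [apply: hR | apply: hF].
have [ba|nba] := eqVneq b a.+1.
  have -> : ((a - 1) * l <= j < a.+2 * l)%N.
    by apply: cond_help => //; rewrite -/b ba // (leq_trans (leq_subr _ _)).
  rewrite ba ?eqxx exprS invfM mulrA mulrAC divff // mul1r normfV (gtr0_norm t0).
  rewrite [X in _ <= X](_ : _ = g * (K * K / s)); last by rewrite !mulrA.
  by apply: ler_pM; [rewrite invr_ge0 ltW | exact: normr_ge0 | exact: tig | apply: L_W].

have [ab1|nab1] := eqVneq a b.+1.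
  have -> : ((a - 1) * l <= j < a.+2 * l)%N.
    by apply: cond_help => //; rewrite -/b ab1 ?subn1 // ltnW // ltnW.
  rewrite ab1 ?eqxx exprS mulfK // (gtr0_norm t0).
  rewrite [X in _ <= X](_ : _ = g * (K * K / s)); last by rewrite !mulrA.
  by apply: ler_pM; [rewrite ltW | exact: normr_ge0 | exact: tg | apply: L_W].
by rewrite normr0 mulr0; case: ifP.
Qed.

Lemma sum_window M (lo hi : nat) (B : R) : 0 <= B -> (lo <= hi)%N ->
  \sum_(j < M) (if (lo <= j < hi)%N then B else 0) <= B *+ (hi - lo).
Proof.
move=> B0 lh.
pose F := fun j : nat => if (lo <= j < hi)%N then B else 0.
have F0 : forall j, 0 <= F j by move=> j; rewrite /F; case: ifP.
rewrite -(big_mkord xpredT F).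
apply: (@le_trans _ _ (\sum_(0 <= j < M + hi) F j)).
  rewrite (@big_cat_nat _ _ _ M 0 (M + hi)) ?leq_addr //=.
  by rewrite lerDl sumr_ge0.
rewrite (@big_cat_nat _ _ _ lo 0 (M + hi)) ?(leq_trans lh (leq_addl M hi)) //=.
rewrite big1_seq ?add0r; last first.
  move=> j; rewrite mem_index_iota => /andP[_ /andP[_ h]].
  by rewrite /F leqNgt h.
rewrite (@big_cat_nat _ _ _ hi lo (M + hi)) ?leq_addl //=.
rewrite [X in _ + X]big1_seq ?addr0; last first.
  move=> j; rewrite mem_index_iota => /andP[_ /andP[h _]].
  by rewrite /F ltnNge h andbF.
rewrite -sumr_const_nat; apply: ler_sum => j _.
by rewrite /F; case: ifP.
Qed.

Lemma tildeH_rowsum (l N : nat) (W Rm Fm : R -> 'M[R]_l)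
  (phiF phitF phiR phitR : 'I_l -> R -> R) (w lam E x K t : R) :
  (0 < l)%N -> 0 < lam -> 1 <= K ->
  (forall j y, `|phitR j y * phiF j y| <= K) ->
  (forall j y, `|phitF j y * phiR j y| <= K) ->
  (forall j y, `|phiF j y * phiR j y| <= K) ->
  (forall i k y, `|ent (W y) i k| <= K) ->
  (forall i k y, i != k -> `|ent (Rm y) i k| <= K) ->
  (forall i k y, i != k -> `|ent (Fm y) i k| <= K) ->
  0 < t -> t <= 1 + lam + `|E| -> t^-1 <= 1 + lam + `|E| ->
  forall i : 'I_(N * l),
  \sum_j `|t ^+ (val i %/ l) * t ^- (val j %/ l) *
     tildeH N W Rm Fm phiF phitF phiR phitR w lam E x i j|
  <= (1 + lam + `|E|) * K * K / Num.sqrt (1 + E ^+ 2) *+ (3 * l).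
Proof.
move=> l0 lam0 K1 h1 h2 h3 hW hR hF t0 tg tig i.
have K0 : 0 <= K by rewrite (le_trans _ K1).
have Bd0 : 0 <= (1 + lam + `|E|) * K * K / Num.sqrt (1 + E ^+ 2).
  by rewrite !mulr_ge0 ?invr_ge0 ?sqrtr_ge0 // !addr_ge0 // ltW.
apply: le_trans.
  apply: ler_sum => j _.
  exact: (@tildeH_entry l N W Rm Fm phiF phitF phiR phitR w lam E x K t l0 lam0 K1 h1 h2 h3 hW hR hF t0 tg tig i j).
have la : ((val i %/ l - 1) * l <= (val i %/ l).+2 * l)%N.
  by rewrite leq_mul2r; apply/orP; right; rewrite (leq_trans (leq_subr 1 _)) // leqW.
apply: le_trans (@sum_window (N * l) _ _ _ Bd0 la) _.
rewrite -[_ *+ (_ - _)]mulr_natr -[_ *+ (3 * l)]mulr_natr ler_wpM2l // ler_nat.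
by rewrite -mulnBl leq_mul2r; apply/orP; right; lia.
Qed.
End TH.

Section Fin.
Variable R : realType.

Lemma fin_bound (I : finType) (P : pred I) (f : I -> R -> R) :
  (forall i, P i -> exists c, forall y, `|f i y| <= c) ->
  exists c, 0 <= c /\ forall i y, P i -> `|f i y| <= c.
Proof.
move=> H.
have H' : forall i, exists c, 0 <= c /\ (P i -> forall y, `|f i y| <= c).
  move=> i; case: (boolP (P i)) => Pi.
    have [c Hc] := H i Pi; exists `|c|; split => // _ y.
    exact: le_trans (Hc y) (ler_norm c).
  by exists 0; split => // /negP.
have [cf Hcf] := fin_all_exists H'.
exists (\sum_i cf i); split; first by apply: sumr_ge0 => i _; case: (Hcf i).
move=> i y Pi; apply: le_trans ((Hcf i).2 Pi y) _.
rewrite (bigD1 i) //= lerDl sumr_ge0 // => j _; by case: (Hcf j).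
Qed.

Lemma ent_bound l (A : R -> 'M[R]_l) (K : R) (P : nat -> nat -> bool) : 0 <= K ->
  (forall (i k : 'I_l) y, P i k -> `|A y i k| <= K) ->
  forall i k y, P i k -> `|ent (A y) i k| <= K.
Proof.
move=> K0 H i k y Pik; rewrite /ent.
case: insubP => [i' _ ei|_]; last by rewrite normr0.
case: insubP => [k' _ ek|_]; last by rewrite normr0.
by apply: H; rewrite ei ek.
Qed.

Lemma absdist (p q : nat) : `|p%:R - q%:R : R| = ((p - q) + (q - p))%N%:R.
Proof.
case: (leqP p q) => h.
  have -> : (p - q)%N = 0%N by apply/eqP; rewrite subn_eq0.
  rewrite add0n (natrB _ h) distrC ger0_norm //.
  by rewrite subr_ge0 ler_nat.
have h' := ltnW h.
have -> : (q - p)%N = 0%N by apply/eqP; rewrite subn_eq0.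
rewrite addn0 (natrB _ h') ger0_norm //.
by rewrite subr_ge0 ler_nat.
Qed.

Lemma gs_bounds (lam E : R) : 0 < lam -> E != 0 ->
  1 <= (1 + lam + `|E|) / Num.sqrt (1 + E ^+ 2) /\
  (1 + lam + `|E|) / Num.sqrt (1 + E ^+ 2) <= 2 * (1 + lam / `|E|).
Proof.
move=> l0 E0.
set s := Num.sqrt (1 + E ^+ 2); set e := `|E|.
have e0 : 0 < e by rewrite normr_gt0.
have s0 : 0 < s by rewrite sqrtr_gt0 ltr_pwDl // sqr_ge0.
have E2 : 0 <= E ^+ 2 by rewrite sqr_ge0.
have se : e <= s by rewrite /e -sqrtr_sqr /s ler_sqrt ?addr_ge0 // lerDr.
have s1 : 1 <= s by rewrite -sqrtr1 /s ler_sqrt ?addr_ge0 // lerDl.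
have s1e : s <= 1 + e.
  rewrite -(ger0_norm (ltW (ltr_pwDl ltr01 (ltW e0)))) -sqrtr_sqr /s ler_sqrt ?sqr_ge0 //.
  rewrite -(real_normK (num_real E)) -/e sqrrD expr1n mul1r -addrA lerD2l lerDr; apply: mulrn_wge0; exact: ltW.
have sg : s <= 1 + lam + e by apply: (le_trans s1e); lra.
split; first by rewrite ler_pdivlMr // mul1r.
have key : (1 + lam + e) * e <= 2 * (e + lam) * s.
  have h3 : e + lam <= e * s + lam * s by rewrite lerD // ler_peMr // ?(ltW e0) ?(ltW l0).
  have h4 : e * e <= e * s by rewrite ler_wpM2l // (ltW e0).
  have h5 : lam * e <= lam * s by rewrite ler_wpM2l // (ltW l0).
  case: (lerP e 1) => he.
    have h1 : lam * e <= lam by rewrite ler_piMr // (ltW l0).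
    have h2 : e * e <= e by rewrite ler_piMr // (ltW e0).
    lra.
  have h1 : e <= e * e by rewrite ler_peMr // ?(ltW e0) ?(ltW he).
  lra.
have -> : 2 * (1 + lam / e) = (2 * (e + lam) * s) / (s * e) by field; rewrite !gt_eqF.
rewrite ler_pdivlMr ?mulr_gt0 //.
have -> : (1 + lam + e) / s * (s * e) = (1 + lam + e) * e by field; rewrite gt_eqF.
exact: key.
Qed.
End Fin.

Theorem proposition2p1 (R : realType) (l : nat) (W Rm Fm : R -> 'M[R]_l)
  (phiF phitF phiR phitR : 'I_l -> R -> R) :
  (0 < l)%N ->
  (* real symmetric matrix functions on T *)
  (forall x : R, (W x)^T = W x) ->
  (forall x : R, (Rm x)^T = Rm x) ->
  (forall x : R, (Fm x)^T = Fm x) ->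
  periodic2pi W -> periodic2pi Rm -> periodic2pi Fm ->
  (* (i) *)
  (forall i k : 'I_l, real_analytic (fun x => W x i k)) ->
  (forall i k : 'I_l, i != k -> real_analytic (fun x => Rm x i k)) ->
  (forall i k : 'I_l, i != k -> real_analytic (fun x => Fm x i k)) ->
  (* (ii) *)
  (forall i : 'I_l, real_analytic (phiF i) /\ real_analytic (phitF i)
                    /\ real_analytic (phiR i) /\ real_analytic (phitR i)) ->
  (forall i : 'I_l, periodic2pi (phiF i) /\ periodic2pi (phitF i)
                    /\ periodic2pi (phiR i) /\ periodic2pi (phitR i)) ->
  (forall i : 'I_l, finitely_many_zeros (phiF i) /\ finitely_many_zeros (phiR i)) ->
  (forall (i : 'I_l) (x : R), phiF i x != 0 -> Fm x i i = phitF i x / phiF i x) ->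
  (forall (i : 'I_l) (x : R), phiR i x != 0 -> Rm x i i = phitR i x / phiR i x) ->
  exists C : R, 0 < C /\
    forall (w : R) (N : nat), (1 < N)%N ->
    forall lam E x : R, 0 < lam -> E != 0 ->
    forall al al' : 'I_(N * l),
      let mu := tmu N W Rm Fm phiF phitF phiR phitR w lam E x al al' in
      mu != 0 ->
      (N * l)%:R^-1 * ln `|mu|
        <= - (`|(pidx l al)%:R - (pidx l al')%:R| / (N * l)%:R) * ln (lam + `|E|)
           + ln (1 + lam / `|E|) + C.
Proof.
move=> l0 _ _ _ pW pR pF aW aR aF aphi pphi _ _ _.
have [KW [KW0 hKW]] : exists c, 0 <= c /\ forall (ik : 'I_l * 'I_l) y, xpredT ik -> `|W y ik.1 ik.2| <= c.
  apply: (@fin_bound R _ xpredT (fun ik y => W y ik.1 ik.2)) => ik _.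
  apply: ra_bound; first exact: aW.
  by move=> y /=; rewrite pW.
have [KR [KR0 hKR]] : exists c, 0 <= c /\ forall (ik : 'I_l * 'I_l) y,
    (fun ik => ik.1 != ik.2) ik -> `|Rm y ik.1 ik.2| <= c.
  apply: (@fin_bound R _ (fun ik => ik.1 != ik.2) (fun ik y => Rm y ik.1 ik.2)) => ik hik.
  apply: ra_bound; first exact: aR.
  by move=> y /=; rewrite pR.
have [KF [KF0 hKF]] : exists c, 0 <= c /\ forall (ik : 'I_l * 'I_l) y,
    (fun ik => ik.1 != ik.2) ik -> `|Fm y ik.1 ik.2| <= c.
  apply: (@fin_bound R _ (fun ik => ik.1 != ik.2) (fun ik y => Fm y ik.1 ik.2)) => ik hik.
  apply: ra_bound; first exact: aF.
  by move=> y /=; rewrite pF.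
have [K1 [K10 hK1]] : exists c, 0 <= c /\ forall (i : 'I_l) y, xpredT i -> `|phiF i y| <= c.
  apply: (@fin_bound R _ xpredT (fun i y => phiF i y)) => i _.
  by apply: ra_bound; [case: (aphi i) | case: (pphi i)].
have [K2 [K20 hK2]] : exists c, 0 <= c /\ forall (i : 'I_l) y, xpredT i -> `|phitF i y| <= c.
  apply: (@fin_bound R _ xpredT (fun i y => phitF i y)) => i _.
  by apply: ra_bound; [case: (aphi i) => _ [] | case: (pphi i) => _ []].
have [K3 [K30 hK3]] : exists c, 0 <= c /\ forall (i : 'I_l) y, xpredT i -> `|phiR i y| <= c.
  apply: (@fin_bound R _ xpredT (fun i y => phiR i y)) => i _.
  by apply: ra_bound; [case: (aphi i) => _ [] _ [] | case: (pphi i) => _ [] _ []].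
have [K4 [K40 hK4]] : exists c, 0 <= c /\ forall (i : 'I_l) y, xpredT i -> `|phitR i y| <= c.
  apply: (@fin_bound R _ xpredT (fun i y => phitR i y)) => i _.
  by apply: ra_bound; [case: (aphi i) => _ [] _ [] | case: (pphi i) => _ [] _ []].
pose Kp := K1 + K2 + K3 + K4.
have Kp0 : 0 <= Kp by rewrite /Kp !addr_ge0.
have hKp : forall i y, [/\ `|phiF i y| <= Kp, `|phitF i y| <= Kp,
                          `|phiR i y| <= Kp & `|phitR i y| <= Kp].
  move=> i y; have := hK1 i y isT; have := hK2 i y isT; have := hK3 i y isT.
  have := hK4 i y isT; rewrite /Kp; split; lra.
pose K := 1 + KW + KR + KF + Kp * Kp.
have K1' : 1 <= K by rewrite /K -!addrA lerDl !addr_ge0 // mulr_ge0.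
have K0 : 0 <= K by apply: le_trans K1'.
have hKKp : Kp * Kp <= K by rewrite /K lerDr !addr_ge0.
have prodb : forall a b : R, `|a| <= Kp -> `|b| <= Kp -> `|a * b| <= K.
  by move=> a b ha hb; rewrite normrM (le_trans _ hKKp) // ler_pM.
have h1 : forall j y, `|phitR j y * phiF j y| <= K.
  by move=> j y; case: (hKp j y) => *; apply: prodb.
have h2 : forall j y, `|phitF j y * phiR j y| <= K.
  by move=> j y; case: (hKp j y) => *; apply: prodb.
have h3 : forall j y, `|phiF j y * phiR j y| <= K.
  by move=> j y; case: (hKp j y) => *; apply: prodb.
have hW : forall i k y, `|ent (W y) i k| <= K.
  move=> i k y; apply: (@ent_bound R l W K (fun _ _ => true)) => // i' k' y' _.
  apply: le_trans (hKW (i', k') y' isT) _; have := mulr_ge0 Kp0 Kp0; rewrite /K; lra.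
have hR : forall i k y, i != k -> `|ent (Rm y) i k| <= K.
  move=> i k y; apply: (@ent_bound R l Rm K (fun i k => i != k)) => // i' k' y' hik.
  apply: le_trans (hKR (i', k') y' _) _; first by [].
  have := mulr_ge0 Kp0 Kp0; rewrite /K; lra.
have hF : forall i k y, i != k -> `|ent (Fm y) i k| <= K.
  move=> i k y; apply: (@ent_bound R l Fm K (fun i k => i != k)) => // i' k' y' hik.
  apply: le_trans (hKF (i', k') y' _) _; first by [].
  have := mulr_ge0 Kp0 Kp0; rewrite /K; lra.
pose c0 := ln ((3 * l)%:R * K * K : R).
have l3 : 1 <= ((3 * l)%:R : R) by rewrite ler1n muln_gt0.
have c01 : 1 <= ((3 * l)%:R * K * K : R) by rewrite -mulrA mulr_ege1 // mulr_ege1.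
have c00 : 0 <= c0 := ln_ge0 c01.
have ln20 : 0 <= ln (2 : R) by apply: ln_ge0; rewrite ler1n.
exists (c0 + ln 2 + 1); split; first by lra.
move=> w N N1 lam E x lam0 E0 al al' mu mu0.
set g := 1 + lam + `|E|.
set s := Num.sqrt (1 + E ^+ 2).
set S := g * K * K / s *+ (3 * l).
have e0 : 0 < `|E| by rewrite normr_gt0.
have g1 : 1 <= g by rewrite /g -addrA lerDl addr_ge0 // ltW.
have g0 : 0 < g by apply: lt_le_trans g1.
have s0 : 0 < s by rewrite sqrtr_gt0 ltr_pwDl // sqr_ge0.
have [gs1 gs2] := @gs_bounds R lam E lam0 E0.
have eS : S = (3 * l)%:R * K * K * (g / s) by rewrite /S -mulr_natl; ring.
have S1 : 1 <= S by rewrite eS mulr_ege1.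
have S0 : 0 <= S by apply: le_trans S1.
have Sp : 0 < S by apply: lt_le_trans S1.
set p := pidx l al; set p' := pidx l al'.
set d := (p - p' + (p' - p))%N.
have hdet : `|mu| <= g ^- d * S ^+ (N * l).-1.
  rewrite /mu /tmu.
  apply: (@minor_bound R (N * l) _ (fun r => (val r %/ l)%N) g S al al' g1 S0).
  move=> t t0 tg tig i.
  exact: (@tildeH_rowsum R l N W Rm Fm phiF phitF phiR phitR w lam E x K t l0 lam0 K1' h1 h2 h3 hW hR hF t0 tg tig i).
rewrite absdist -/d.
have mu0' : 0 < `|mu| by rewrite normr_gt0.
have NP : (0 < N * l)%N by apply: leq_ltn_trans (ltn_ord al).
set n := (N * l).-1.
have pos1 : 0 < g ^- d * S ^+ n by rewrite mulr_gt0 // ?invr_gt0 exprn_gt0.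
have Lmu : ln `|mu| <= - (ln g * d%:R) + ln S * n%:R.
  apply: (@le_trans _ _ (ln (g ^- d * S ^+ n))).
    by rewrite ler_ln ?posrE.
  rewrite lnM ?posrE ?invr_gt0 ?exprn_gt0 // lnV ?posrE ?exprn_gt0 // !lnXn //.
  by rewrite !mulr_natr.
have le_g : ln (lam + `|E|) <= ln g.
  by rewrite ler_ln ?posrE ?addr_gt0 // /g -addrA lerDr.
have lS0 : 0 <= ln S := ln_ge0 S1.
have lSb : ln S <= c0 + ln 2 + ln (1 + lam / `|E|).
  have h0 : 0 < (3 * l)%:R * K * K :> R by apply: lt_le_trans c01.
  have h1' : 0 < g / s by rewrite divr_gt0.
  have h2' : 0 < 1 + lam / `|E| by rewrite addr_gt0 // divr_gt0.
  rewrite eS lnM ?posrE // -addrA lerD2l -lnM ?posrE //.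
  by rewrite ler_ln ?posrE // mulr_gt0.
have nN : n%:R <= (N * l)%:R :> R by rewrite ler_nat leq_pred.
have NR : 0 < (N * l)%:R :> R by rewrite ltr0n.
set NR' := (N * l)%:R : R in nN NR *.
set u := NR'^-1.
have u0 : 0 < u by rewrite invr_gt0.
have uN : u * NR' = 1 by rewrite mulVf // gt_eqF.
have step : u * ln `|mu| <= u * (- (ln g * d%:R) + ln S * n%:R) by rewrite ler_pM2l.
have P1 : 0 <= u * d%:R * (ln g - ln (lam + `|E|))
  by rewrite !mulr_ge0 ?subr_ge0 // ltW.
have P2 : 0 <= ln S * (1 - u * n%:R).
  by rewrite mulr_ge0 // subr_ge0 (le_trans (ler_wpM2l (ltW u0) nN)) // uN.
nra.
Qed.
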